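(* Let $\mathcal{A}$ be a unital $\mathbb{F}$-algebra of dimension $n>2$ having the maximal possible length $l(\mathcal{A})=2^{n-2}$. Then there exists a generating set $S$ of $\mathcal{A}$ whose characteristic sequence is $(0,1,2,4,\ldots,2^{n-2})$, i.e. $m_0=0$ and $m_h=2^{h-1}$ for $h=1,\ldots,n-1$.
   Context: Algebras are finite-dimensional, unital, not necessarily associative, over a field $\mathbb{F}$. For a finite generating set $S$ of $\mathcal{A}$, a word in $S$ is any product (with any bracketing) of finitely many elements of $S$; its length is the number of factors, and $1$ is a word of length $0$. $L_i(S)$ is the linear span of all words in $S$ of length at most $i$ (so $L_0(S)=\mathbb{F}$); $l(S)=\min\{k\ge0: L_k(S)=\mathcal{A}\}$ and $l(\mathcal{A})=\max\{l(S): S\text{ a finite generating set}\}$. It is known that $l(\mathcal{A})\le 2^{n-2}$ for unital algebras of dimension $n\ge2$, and this bound is attained. The characteristic sequence of $S$ is the non-decreasing sequence $(m_0,\ldots,m_{n-1})$ constructed as follows: $m_0=0$; with $s_1=\dim L_1(S)-1$, set $m_1=\cdots=m_{s_1}=1$; inductively, if $m_1,\ldots,m_r$ are defined using $L_1(S),\ldots,L_{k-1}(S)$, put $s_k=\dim L_k(S)-\dim L_{k-1}(S)$ and set $m_{r+1}=\cdots=m_{r+s_k}=k$. *)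

(* Defs.v *)
From HB Require Import structures.
From mathcomp Require Import all_boot all_algebra.
Set Implicit Arguments. Unset Strict Implicit. Unset Printing Implicit Defensive.
Import GRing.Theory.
Local Open Scope ring_scope.

Definition unital_algebra (F : fieldType) (V : vectType F)
    (mul : V -> V -> V) (one : V) : Prop :=
  [/\ (forall (a : F) (x y z : V), mul (a *: x + y) z = a *: mul x z + mul y z),
      (forall (a : F) (x y z : V), mul z (a *: x + y) = a *: mul z x + mul z y)
    & (forall x : V, mul one x = x /\ mul x one = x)].

Section Words.
Variables (F : fieldType) (V : vectType F) (mul : V -> V -> V) (one : V).

(* words_rec S k = [:: W_0; W_1; ...; W_k] where W_i is the list of all words
   in S of length exactly i (all bracketings): W_0 = [:: one], W_1 = S, and
   for i >= 2, W_i consists of the products u*v with u in W_j, v in W_(i-j),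
   1 <= j <= i-1. *)
Fixpoint words_rec (S : seq V) (k : nat) : seq (seq V) :=
  match k with
  | 0 => [:: [:: one]]
  | k'.+1 =>
      let W := words_rec S k' in
      rcons W (if k' is 0 then S
               else flatten [seq allpairs mul (nth [::] W i) (nth [::] W (k'.+1 - i))
                            | i <- iota 1 k'])
  end.

Definition Lsp (S : seq V) (k : nat) : {vspace V} := <<flatten (words_rec S k)>>%VS.

Definition generates (S : seq V) : Prop := exists k, Lsp S k = fullv.

Definition is_lengthS (S : seq V) (k : nat) : Prop :=
  Lsp S k = fullv /\ forall j, (j < k)%N -> Lsp S j <> fullv.

Definition alg_length_is (N : nat) : Prop :=
  (exists S k, is_lengthS S k /\ k = N) /\
  (forall S k, is_lengthS S k -> (k <= N)%N).

Definition char_seq (S : seq V) (K : nat) : seq nat :=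
  0%N :: flatten [seq nseq (\dim (Lsp S k) - \dim (Lsp S k.-1))%N k | k <- iota 1 K].

End Words.

(* Main.v *)
Require Import Defs.
From HB Require Import structures.
From mathcomp Require Import all_boot all_algebra zify.
Set Implicit Arguments. Unset Strict Implicit. Unset Printing Implicit Defensive.
Import GRing.Theory.
Local Open Scope ring_scope.

Definition Wd (F : fieldType) (V : vectType F) (mul : V -> V -> V) (one : V) (S : seq V) i :=
  nth [::] (words_rec mul one S i) i.

Lemma size_words (F : fieldType) (V : vectType F) (mul : V -> V -> V) (one : V) S k :
  size (words_rec mul one S k) = k.+1.
Proof. by elim: k => [|k IH] //=; rewrite size_rcons IH. Qed.

Lemma nth_words (F : fieldType) (V : vectType F) (mul : V -> V -> V) (one : V) S k i :
  (i <= k)%N -> nth [::] (words_rec mul one S k) i = Wd mul one S i.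
Proof.
elim: k => [|k IH]; first by rewrite leqn0 => /eqP->.
rewrite leq_eqVlt => /orP[/eqP->//|]; rewrite ltnS => hi.
by rewrite /= nth_rcons size_words ltnS hi IH.
Qed.

Lemma Wd0 (F : fieldType) (V : vectType F) (mul : V -> V -> V) (one : V) S :
  Wd mul one S 0 = [:: one].
Proof. by []. Qed.

Lemma Wd1 (F : fieldType) (V : vectType F) (mul : V -> V -> V) (one : V) S :
  Wd mul one S 1 = S.
Proof. by []. Qed.

Lemma words_recS (F : fieldType) (V : vectType F) (mul : V -> V -> V) (one : V) S k :
  words_rec mul one S k.+2 = rcons (words_rec mul one S k.+1)
     (flatten [seq allpairs mul (nth [::] (words_rec mul one S k.+1) i)
                 (nth [::] (words_rec mul one S k.+1) (k.+2 - i)) | i <- iota 1 k.+1]).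
Proof. by []. Qed.

Lemma WdS2 (F : fieldType) (V : vectType F) (mul : V -> V -> V) (one : V) S k :
  Wd mul one S k.+2 = flatten [seq allpairs mul (Wd mul one S i) (Wd mul one S (k.+2 - i))
                            | i <- iota 1 k.+1].
Proof.
rewrite {1}/Wd words_recS nth_rcons size_words ltnn eqxx.
congr flatten; apply/eq_in_map => i; rewrite mem_iota => /andP[h1 h2].
rewrite !nth_words //; lia.
Qed.

Lemma memLsp (F : fieldType) (V : vectType F) (mul : V -> V -> V) (one : V) S k i x :
  (i <= k)%N -> x \in Wd mul one S i -> x \in Lsp mul one S k.
Proof.
move=> hik hx; apply: memv_span; apply/flattenP.
exists (nth [::] (words_rec mul one S k) i); last by rewrite nth_words.
by apply: mem_nth; rewrite size_words ltnS.
Qed.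

Lemma Lsp_sub (F : fieldType) (V : vectType F) (mul : V -> V -> V) (one : V) S k
  (U : {vspace V}) :
  (forall i, (i <= k)%N -> {subset Wd mul one S i <= U}) -> (Lsp mul one S k <= U)%VS.
Proof.
move=> H; apply/span_subvP => x /flattenP[t /(nthP [::])[i hi <-]].
rewrite size_words ltnS in hi.
by rewrite nth_words //; apply: H.
Qed.

Lemma Lsp_mono (F : fieldType) (V : vectType F) (mul : V -> V -> V) (one : V) S j k :
  (j <= k)%N -> (Lsp mul one S j <= Lsp mul one S k)%VS.
Proof.
move=> hjk; apply: Lsp_sub => i hi x hx; apply: (memLsp (i:=i)) => //.
exact: leq_trans hi hjk.
Qed.

Lemma mem_Wdmul (F : fieldType) (V : vectType F) (mul : V -> V -> V) (one : V) S a b u v :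
  (1 <= a)%N -> (1 <= b)%N -> u \in Wd mul one S a -> v \in Wd mul one S b ->
  mul u v \in Wd mul one S (a + b).
Proof.
case: a => // a; case: b => // b _ _ hu hv.
have -> : (a.+1 + b.+1 = (a + b).+2)%N by lia.
rewrite WdS2; apply/flattenP.
exists (allpairs mul (Wd mul one S a.+1) (Wd mul one S ((a + b).+2 - a.+1)))%N.
  by apply/mapP; exists a.+1 => //; rewrite mem_iota; lia.
have -> : ((a + b).+2 - a.+1 = b.+1)%N by lia.
by apply: allpairs_f.
Qed.

Lemma WdmulP (F : fieldType) (V : vectType F) (mul : V -> V -> V) (one : V) S k x :
  x \in Wd mul one S k.+2 -> exists a b u v, (a + b = k.+2)%N /\ [/\ (1 <= a)%N, (1 <= b)%N,
     u \in Wd mul one S a, v \in Wd mul one S b & x = mul u v].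
Proof.
rewrite WdS2 => /flattenP[t /mapP[i hi ->]] /allpairsP[[u v] /= [hu hv ->]].
rewrite mem_iota in hi.
exists i, (k.+2 - i)%N, u, v; split; first lia. split => //; lia.
Qed.

Lemma span_lin (F : fieldType) (V : vectType F) (f : V -> V)
  (Hf : forall (a : F) x y, f (a *: x + y) = a *: f x + f y) (X : seq V) (U : {vspace V}) :
  {in X, forall y, f y \in U} -> forall x, x \in <<X>>%VS -> f x \in U.
Proof.
have f0 : f 0 = 0.
  by have := Hf (-1) 0 0; rewrite scaler0 addr0 scaleN1r addNr.
elim: X => [|y X IH] H x.
  by rewrite span_nil memv0 => /eqP->; rewrite f0 mem0v.
rewrite span_cons => /memv_addP[y' /vlineP[a ->] [z hz ->]].
rewrite Hf; apply: memvD; first by apply: memvZ; apply: H; rewrite mem_head.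
by apply: IH => // w hw; apply: H; rewrite in_cons hw orbT.
Qed.

Lemma memflatP (F : fieldType) (V : vectType F) (mul : V -> V -> V) (one : V) S m y :
  y \in flatten (words_rec mul one S m) -> exists a, (a <= m)%N /\ y \in Wd mul one S a.
Proof.
move=> /flattenP[t /(nthP [::])[i hi <-]].
rewrite size_words ltnS in hi.
by rewrite nth_words // => hy; exists i.
Qed.

Lemma Lsp_mulclosed (F : fieldType) (V : vectType F) (mul : V -> V -> V) (one : V) S m :
  unital_algebra mul one ->
  (Lsp mul one S (maxn 1 (2 * m)) <= Lsp mul one S m)%VS ->
  forall u v, u \in Lsp mul one S m -> v \in Lsp mul one S m -> mul u v \in Lsp mul one S m.
Proof.
case=> HL HR H1 H u v hu hv.
apply: (span_lin (f := fun x => mul x v)) hu => [a x y|y /memflatP[a [ha hy]]].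
  exact: HL.
apply: (span_lin (f := mul y)) hv => [b x z|z /memflatP[b [hb hz]]].
  exact: HR.
case: a ha hy => [|a] ha hy.
  by rewrite Wd0 mem_seq1 in hy; rewrite (eqP hy) (H1 z).1; apply: memLsp hz.
case: b hb hz => [|b] hb hz.
  by rewrite Wd0 mem_seq1 in hz; rewrite (eqP hz) (H1 y).2; apply: memLsp hy.
apply: (subvP H); apply: (memLsp (i := (a.+1 + b.+1)%N)); first lia.
exact: mem_Wdmul.
Qed.

Lemma Lsp_closure (F : fieldType) (V : vectType F) (mul : V -> V -> V) (one : V) S m :
  unital_algebra mul one ->
  (Lsp mul one S (maxn 1 (2 * m)) <= Lsp mul one S m)%VS ->
  forall k, (Lsp mul one S k <= Lsp mul one S m)%VS.
Proof.
move=> ua H k; apply: Lsp_sub => i _; elim/ltn_ind: i => i IH x hx.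
case: (leqP i (maxn 1 (2 * m))) => hi.
  by apply: (subvP H); apply: memLsp hx.
case: i IH hi hx => [|[|i]] IH hi hx; try lia.
have [a [b [u [v [hab [ha hb hu hv ->]]]]]] := WdmulP hx.
apply: Lsp_mulclosed => //; [apply: (IH a) | apply: (IH b)] => //; lia.
Qed.

Lemma flatten_nil0 (s : seq nat) (g : nat -> nat) :
  (forall k, k \in s -> g k = 0%N) -> flatten [seq nseq (g k) k | k <- s] = [::].
Proof.
elim: s => [|x s IH] H //=.
by rewrite H ?mem_head //= IH // => k hk; apply: H; rewrite in_cons hk orbT.
Qed.

Local Close Scope ring_scope.

Theorem proposition6p1 (F : fieldType) (V : vectType F)
    (mul : V -> V -> V) (one : V) :
  unital_algebra mul one ->
  (2 < \dim (fullv : {vspace V}))%N ->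
  alg_length_is mul one (2 ^ (\dim (fullv : {vspace V}) - 2)) ->
  exists (S : seq V) (K : nat),
    is_lengthS mul one S K /\
    char_seq mul one S K =
      0%N :: [seq 2 ^ h.-1 | h <- iota 1 (\dim (fullv : {vspace V}) - 1)].
Proof.
move=> ua hn [[S [K [[hK hlt] hKe]]] _].
exists S, K; split; first by [].
set n := \dim (fullv : {vspace V}) in hn hKe *.
pose d k := \dim (Lsp mul one S k).
have dle k : (d k <= n)%N by apply: dimvS; apply: subvf.
have dmono j k : (j <= k)%N -> (d j <= d k)%N by move=> h; apply: dimvS; apply: Lsp_mono.
have one0 : one != 0%R.
  apply/negP => /eqP o0; move: hn.
  suff e : (fullv : {vspace V}) = 0%VS by rewrite /n e dimv0.
  apply/vspaceP => x; rewrite memvf memv0; apply/esym/eqP; rewrite /=.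
  case: ua => HL _ H1; rewrite -(H1 x).1 o0.
  by have := HL (-1)%R 0%R 0%R x; rewrite scaler0 addr0 scaleN1r addNr.
have d0 : d 0%N = 1%N by rewrite /d /Lsp /= span_seq1 dim_vline one0.
have dK : d K = n by rewrite /d hK.
have dbl m : (m < K)%N -> (d m < d (maxn 1 (2 * m)))%N.
  move=> hm; rewrite ltnNge; apply/negP => hle.
  have Hs : (Lsp mul one S (maxn 1 (2 * m)) <= Lsp mul one S m)%VS.
    have /eqP -> // : Lsp mul one S m == Lsp mul one S (maxn 1 (2 * m)).
    by rewrite eqEdim hle Lsp_mono // leq_max leq_pmull ?orbT.
  apply: (hlt m hm); apply/eqP; rewrite eqEdim subvf /=.
  by rewrite -hK; apply: dimvS; apply: Lsp_closure.
have chain s m : (1 <= m)%N -> (2 ^ s * m < 2 * K)%N -> (d m + s <= d (2 ^ s * m))%N.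
  move=> hm; elim: s => [|s IH]; first by rewrite expn0 mul1n addn0.
  rewrite expnS -mulnA => h.
  have h1 : (2 ^ s * m < K)%N by rewrite -(ltn_pmul2l (isT : (0 < 2)%N)).
  have := dbl _ h1; rewrite (maxn_idPr _); last by rewrite !muln_gt0 expn_gt0 hm.
  move=> h3; have h2 : (d m + s <= d (2 ^ s * m))%N by apply: IH; lia.
  by rewrite addnS; apply: leq_ltn_trans h2 h3.
have d1 : (2 <= d 1%N)%N.
  have h := dbl 0%N; rewrite d0 muln0 in h; apply: h.
  by rewrite hKe expn_gt0.
have pw a b : (a <= b)%N -> (2 ^ a <= 2 ^ b)%N by move=> h; rewrite leq_exp2l.
have upper i m : (i <= n - 2)%N -> (2 ^ i <= m < 2 ^ i.+1)%N -> (d m <= i + 2)%N.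
  move=> hi /andP[h1 h2].
  have hm : (1 <= m)%N by apply: leq_trans h1; rewrite expn_gt0.
  have e : (2 ^ (n - 2 - i) * 2 ^ i.+1 = 2 * K)%N.
    by rewrite -expnD hKe -expnS; congr (2 ^ _); lia.
  have := chain (n - 2 - i)%N m hm.
  rewrite -e ltn_pmul2l ?expn_gt0 // => /(_ h2) h.
  have := dle (2 ^ (n - 2 - i) * m)%N; lia.
have lower i : (i <= n - 2)%N -> (i + 2 <= d (2 ^ i))%N.
  move=> hi; have := chain i 1%N isT; rewrite muln1.
  have : (2 ^ i < 2 * K)%N.
    rewrite hKe -expnS ltn_exp2l //; lia.
  move=> h /(_ h); lia.
rewrite /char_seq; congr cons.
have main p : (p <= n - 2)%N ->
  flatten [seq nseq (d k - d k.-1) k | k <- iota 1 (2 ^ p)] =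
  [seq 2 ^ h.-1 | h <- iota 1 p.+1].
  elim: p => [|p IH] hp.
    have := upper 0%N 1%N (leq0n _) isT; rewrite /= d0 => h.
    by rewrite (_ : d 1%N = 2%N) //; apply/eqP; rewrite eqn_leq h d1.
  set X := (2 ^ p)%N.
  have X1 : (1 <= X)%N by rewrite expn_gt0.
  have eX : (2 ^ p.+1 = X + ((X - 1) + 1))%N by rewrite expnS -/X; lia.
  rewrite eX !iotaD !map_cat !flatten_cat IH; last by lia.
  rewrite -[p.+2]addn1 iotaD map_cat; congr cat.
  rewrite flatten_nil0 /=; last first.
    move=> k; rewrite mem_iota => /andP[k1 k2].
    have a1 := upper p k (ltnW hp).
    have a2 := lower p (ltnW hp).
    have a3 := dmono X k.-1.
    have a4 := dmono k.-1 k.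
    rewrite -/X expnS -/X in a1 a2; lia.
  have -> : (1 + X + (X - 1) = 2 ^ p.+1)%N by rewrite expnS -/X; lia.
  have b1 := upper p (2 ^ p.+1).-1 (ltnW hp).
  have b2 := lower p.+1 hp.
  have b3 := upper p.+1 (2 ^ p.+1) hp.
  have b4 := dmono X (2 ^ p.+1).-1.
  have b5 := lower p (ltnW hp).
  rewrite -/X !expnS -/X in b1 b2 b3 b4 b5 *.
  rewrite (_ : (0 + X + (X - 1)) = (2 * X).-1)%N; last by lia.
  have -> : (d (2 * X)%N - d (2 * X).-1 = 1)%N by lia.
  by [].
have -> : (K = 2 ^ (n - 2))%N by [].
rewrite main //; congr map; congr iota; lia.
Qed.
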